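(* Let $k \ge 1$ and let $P_{2k}$ be the uniform distribution on $2k$ equally spaced points of the unit circle $\mathbb{S}^1$, equipped with the arc length distance $d$. Then for each of these $2k$ points $x$, $D(x; P_{2k}) = -1 + \frac{1}{k} - \frac{1}{4 k^2} + \sum_{j = 1}^{k} \frac{1}{j^2}$.
   Context: Define $h: \mathcal{X}^3 \to \mathbb{R}$ by $h(x_1, x_2, x_3) := \mathbb{I}( x_3 \notin \{x_1, x_2\} ) \dfrac{ d^2(x_1, x_3) + d^2(x_2, x_3) - d^2(x_1, x_2) }{d(x_1, x_3)\, d(x_2, x_3) }$, where $h := 0$ when $x_3 \in \{x_1,x_2\}$. The metric spatial depth of $\mu \in \mathcal{X}$ with respect to a probability distribution $P_X$ on $\mathcal{X}$ is $D(\mu; P_X) := 1 - \frac{1}{2} \mathrm{E} \{ h(X_1, X_2, \mu) \}$, where $X_1, X_2 \sim P_X$ are independent. *)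

(* Defs.v *)
From Stdlib Require Import Reals Lra List.
Import ListNotations.
Open Scope R_scope.

(* The unit circle S^1, represented as points of R^2 (only unit vectors are used). *)
Definition S1 : Type := (R * R)%type.

Definition S1_eq_dec (u v : S1) : {u = v} + {u <> v}.
Proof.
  destruct u as [a b], v as [c e].
  destruct (Req_EM_T a c) as [H1|H1]; destruct (Req_EM_T b e) as [H2|H2];
    [left; subst; reflexivity | right; intro H; inversion H; contradiction ..].
Defined.

(* Arc length (geodesic) distance on the unit circle: angle between unit vectors. *)
Definition arc_dist (u v : S1) : R := acos (fst u * fst v + snd u * snd v).

Definition h_ker (d : S1 -> S1 -> R) (x1 x2 x3 : S1) : R :=
  if S1_eq_dec x3 x1 then 0
  else if S1_eq_dec x3 x2 then 0
  else (d x1 x3 ^ 2 + d x2 x3 ^ 2 - d x1 x2 ^ 2) / (d x1 x3 * d x2 x3).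

Definition lsum {A : Type} (f : A -> R) (l : list A) : R :=
  fold_right (fun a acc => f a + acc) 0 l.

(* E{ h(X1,X2,mu) } with X1, X2 independent, each uniformly distributed on the
   (distinct) points listed in pts. *)
Definition unif_expect_h (d : S1 -> S1 -> R) (pts : list S1) (mu : S1) : R :=
  / (INR (length pts) ^ 2) * lsum (fun a => lsum (fun b => h_ker d a b mu) pts) pts.

Definition metric_spatial_depth (d : S1 -> S1 -> R) (pts : list S1) (mu : S1) : R :=
  1 - / 2 * unif_expect_h d pts mu.

(* The j-th of 2k equally spaced points on S^1: angle j * (2π / 2k) = π j / k. *)
Definition circ_pt (k j : nat) : S1 :=
  (cos (PI * INR j / INR k), sin (PI * INR j / INR k)).

Definition P2k_pts (k : nat) : list S1 := map (circ_pt k) (seq 0 (2 * k)).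

(* Main.v *)
Require Import Defs.
From Stdlib Require Import Reals List.
Open Scope R_scope.
From Stdlib Require Import Reals Lra Lia List Setoid.
Import ListNotations.
Open Scope R_scope.

Lemma lsum_app {A} (f : A -> R) l1 l2 : lsum f (l1 ++ l2) = lsum f l1 + lsum f l2.
Proof. induction l1; simpl; [ring|rewrite IHl1; ring]. Qed.

Lemma lsum_ext_in {A} (f g : A -> R) l : (forall x, In x l -> f x = g x) -> lsum f l = lsum g l.
Proof. induction l; simpl; intros H; auto. rewrite H by auto. rewrite IHl; auto. Qed.

Lemma lsum_ext {A} (f g : A -> R) l : (forall x, f x = g x) -> lsum f l = lsum g l.
Proof. intros; apply lsum_ext_in; auto. Qed.

Lemma lsum_plus {A} (f g : A -> R) l : lsum (fun x => f x + g x) l = lsum f l + lsum g l.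
Proof. induction l; simpl; [ring|rewrite IHl; ring]. Qed.

Lemma lsum_minus {A} (f g : A -> R) l : lsum (fun x => f x - g x) l = lsum f l - lsum g l.
Proof. induction l; simpl; [ring|rewrite IHl; ring]. Qed.

Lemma lsum_scal {A} c (f : A -> R) l : lsum (fun x => c * f x) l = c * lsum f l.
Proof. induction l; simpl; [ring|rewrite IHl; ring]. Qed.

Lemma lsum_const {A} c (l : list A) : lsum (fun _ => c) l = INR (length l) * c.
Proof. induction l; simpl length; [simpl; ring| rewrite S_INR; simpl; rewrite IHl; ring]. Qed.

Lemma lsum_map {A B} (f : B -> R) (g : A -> B) l : lsum f (map g l) = lsum (fun x => f (g x)) l.
Proof. induction l; simpl; auto. rewrite IHl; auto. Qed.

Lemma lsum_swap {A B} (f : A -> B -> R) l1 l2 :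
  lsum (fun a => lsum (fun b => f a b) l2) l1 = lsum (fun b => lsum (fun a => f a b) l1) l2.
Proof.
  induction l1; simpl.
  - induction l2; simpl; auto. rewrite <- IHl2; ring.
  - rewrite IHl1. rewrite <- lsum_plus. reflexivity.
Qed.

Lemma lsum_seq_shift (f : nat -> R) m s n :
  lsum f (seq (s + m) n) = lsum (fun x => f (x + m)%nat) (seq s n).
Proof.
  revert s; induction n; intros s; simpl; auto.
  rewrite <- IHn. reflexivity.
Qed.

Lemma lsum_seqS_last (f : nat -> R) s n : lsum f (seq s (S n)) = lsum f (seq s n) + f (s + n)%nat.
Proof. rewrite seq_S, lsum_app; simpl; ring. Qed.

Lemma lsum_refl (g : nat -> R) n : lsum (fun b => g (n - b)%nat) (seq 0 n) = lsum g (seq 1 n).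
Proof.
  revert g; induction n; intros g; [reflexivity|].
  rewrite lsum_seqS_last.
  rewrite (lsum_ext_in _ (fun b => g (S (n - b)))).
  2:{ intros x Hx; apply in_seq in Hx; f_equal; lia. }
  rewrite (IHn (fun b => g (S b))).
  replace (S n - (0 + n))%nat with 1%nat by lia.
  change (seq 1 (S n)) with (1%nat :: seq 2 n).
  simpl seq at 2. rewrite <- (seq_shift n 1). simpl lsum at 2. rewrite lsum_map. ring.
Qed.
Definition ind (b : bool) : R := if b then 1 else 0.
Definition H1 k := lsum (fun p => 1 / INR p) (seq 1 k).
Definition H2 k := lsum (fun p => 1 / INR p ^ 2) (seq 1 k).
Definition Vs k := lsum (fun p => lsum (fun q => ind (Nat.ltb k (p+q)) / (INR p * INR q)) (seq 1 k)) (seq 1 k).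
Definition Us k := lsum (fun p => lsum (fun q => INR (p+q-k) / (INR p * INR q)) (seq 1 k)) (seq 1 k).

Lemma single_out (f : nat -> R) m s n :
  lsum (fun q => if Nat.eqb q m then f q else 0) (seq s n) =
  if andb (Nat.leb s m) (Nat.ltb m (s+n)) then f m else 0.
Proof.
  revert s; induction n; intros s; simpl.
  - destruct (Nat.leb_spec s m), (Nat.ltb_spec m (s+0)); simpl; auto; lia.
  - rewrite IHn. destruct (Nat.eqb_spec s m).
    + subst. destruct (Nat.leb_spec (S m) m); [lia|]. simpl.
      destruct (Nat.leb_spec m m), (Nat.ltb_spec m (m + S n)); simpl; try lia; ring.
    + destruct (Nat.leb_spec (S s) m), (Nat.leb_spec s m), (Nat.ltb_spec m (S s + n)),
         (Nat.ltb_spec m (s + S n)); simpl; try lia; ring.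
Qed.

Lemma INR_pos_seq p s n : (1 <= s)%nat -> In p (seq s n) -> 0 < INR p.
Proof. intros H Hp; apply in_seq in Hp; apply lt_0_INR; lia. Qed.

Lemma sum_recip_refl k : lsum (fun p => 1 / INR (k + 1 - p)) (seq 1 k) = H1 k.
Proof.
  unfold H1. rewrite <- (seq_shift k 0) at 1. rewrite lsum_map.
  rewrite (lsum_ext _ (fun b => 1 / INR (k - b))).
  - apply (lsum_refl (fun p => 1 / INR p)).
  - intros; f_equal; f_equal; lia.
Qed.

Lemma sum_pq k : lsum (fun p => 1 / (INR p * INR (k + 1 - p))) (seq 1 k) = 2 * H1 k / (INR k + 1).
Proof.
  rewrite (lsum_ext_in _ (fun p => / (INR k + 1) * (1 / INR p + 1 / INR (k+1-p)))).
  - rewrite lsum_scal, lsum_plus, sum_recip_refl. unfold H1. field.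
    pose proof (pos_INR k); lra.
  - intros p Hp. apply in_seq in Hp. rewrite minus_INR by lia. rewrite plus_INR. simpl.
    assert (0 < INR p) by (apply lt_0_INR; lia).
    assert (INR p < INR k + 1) by (rewrite <- S_INR; apply lt_INR; lia).
    field. lra.
Qed.

Lemma Vs_S k : Vs (S k) = Vs k + 1 / (INR k + 1) ^ 2.
Proof.
  unfold Vs. rewrite lsum_seqS_last.
  rewrite (lsum_ext_in _ (fun p => lsum (fun q => ind (Nat.ltb k (p+q)) / (INR p * INR q)) (seq 1 k)
      - 1 / (INR p * INR (k + 1 - p)) + 1 / (INR p * (INR k + 1)))).
  2:{ intros p Hp. assert (Hp' := Hp). apply in_seq in Hp'.
      rewrite lsum_seqS_last.
      rewrite (lsum_ext_in _ (fun q => ind (Nat.ltb k (p+q)) / (INR p * INR q)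
          - (if Nat.eqb q (k + 1 - p) then 1 / (INR p * INR q) else 0))).
      - rewrite lsum_minus, single_out.
        destruct (Nat.leb_spec 1 (k+1-p)); [|lia]. destruct (Nat.ltb_spec (k+1-p) (1+k)); [|lia].
        cbn [andb]. unfold ind. destruct (Nat.ltb_spec k (p + (1 + k))); [|lia].
        destruct (Nat.ltb_spec (S k) (p + (1 + k))); [|lia].
        replace (INR (1 + k)) with (INR k + 1) by (rewrite plus_INR; simpl; ring). ring.
      - intros q Hq. apply in_seq in Hq. unfold ind.
        destruct (Nat.eqb_spec q (k+1-p)), (Nat.ltb_spec (S k) (p+q)), (Nat.ltb_spec k (p+q));
          try lia; cbv beta iota; unfold Rdiv; ring. }
  rewrite lsum_plus, lsum_minus, sum_pq.
  rewrite (lsum_ext_in (fun p => 1 / (INR p * (INR k + 1))) (fun p => / (INR k + 1) * (1 / INR p))).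
  2:{ intros p Hp. assert (0 < INR p) by (eapply INR_pos_seq; [|eauto]; lia).
      field. pose proof (pos_INR k); split; lra. }
  rewrite lsum_scal.
  rewrite (lsum_ext_in (fun q => ind (Nat.ltb (S k) (1 + k + q)) / (INR (1 + k) * INR q))
               (fun q => / (INR k + 1) * (1 / INR q))).
  2:{ intros q Hq. assert (0 < INR q) by (eapply INR_pos_seq; [|eauto]; lia).
      apply in_seq in Hq. unfold ind. destruct (Nat.ltb_spec (S k) (1+k+q)); [|lia].
      rewrite plus_INR. simpl. field. pose proof (pos_INR k); split; lra. }
  rewrite lsum_scal. fold (H1 k). fold (H1 (S k)).
  assert (E : H1 (S k) = H1 k + 1 / (INR k + 1)).
  { unfold H1. rewrite lsum_seqS_last. f_equal. f_equal. rewrite plus_INR. simpl. ring. }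
  rewrite E. field. pose proof (pos_INR k); lra.
Qed.

Lemma H2_S k : H2 (S k) = H2 k + 1 / (INR k + 1) ^ 2.
Proof. unfold H2. rewrite lsum_seqS_last. f_equal. f_equal. f_equal. rewrite plus_INR. simpl. ring. Qed.

Lemma Vs_H2 k : Vs k = H2 k.
Proof. induction k. reflexivity. rewrite Vs_S, H2_S, IHk. reflexivity. Qed.

Lemma Us_S k : Us (S k) = Us k - Vs k + 2 - 1 / (INR k + 1).
Proof.
  unfold Us, Vs. rewrite lsum_seqS_last.
  rewrite (lsum_ext_in _ (fun p => lsum (fun q => INR (p+q-k) / (INR p * INR q)) (seq 1 k)
      - lsum (fun q => ind (Nat.ltb k (p+q)) / (INR p * INR q)) (seq 1 k) + / (INR k + 1))).
  2:{ intros p Hp. assert (0 < INR p) by (eapply INR_pos_seq; [|eauto]; lia).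
      apply in_seq in Hp.
      rewrite lsum_seqS_last, <- lsum_minus.
      replace (p + (1 + k) - S k)%nat with p by lia.
      replace (INR (1 + k)) with (INR k + 1) by (rewrite plus_INR; simpl; ring).
      f_equal.
      - apply lsum_ext_in. intros q Hq. apply in_seq in Hq. unfold ind.
        destruct (Nat.ltb_spec k (p+q)).
        + replace (p + q - k)%nat with (S (p + q - S k)) by lia. rewrite S_INR.
          unfold Rdiv. ring.
        + replace (p + q - k)%nat with 0%nat by lia. replace (p + q - S k)%nat with 0%nat by lia.
          unfold Rdiv; ring.
      - field. pose proof (pos_INR k); split; lra. }
  rewrite lsum_plus, lsum_minus, lsum_const, length_seq.
  rewrite (lsum_ext_in (fun q => INR (1 + k + q - S k) / (INR (1 + k) * INR q)) (fun q => / (INR k + 1))).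
  2:{ intros q Hq. assert (0 < INR q) by (eapply INR_pos_seq; [|eauto]; lia).
      replace (1 + k + q - S k)%nat with q by lia.
      replace (INR (1 + k)) with (INR k + 1) by (rewrite plus_INR; simpl; ring).
      field. pose proof (pos_INR k); split; lra. }
  rewrite lsum_const, length_seq. rewrite S_INR. field. pose proof (pos_INR k); lra.
Qed.

Lemma Us_closed k : Us k = 2 * INR k - INR k * H2 k.
Proof.
  induction k. unfold Us; simpl; ring.
  rewrite Us_S, IHk, Vs_H2, H2_S, S_INR. field. pose proof (pos_INR k); lra.
Qed.

Definition Cs k := lsum (fun p => lsum (fun q => INR (p+q-k) / (INR p * INR q)) (seq 1 (k - 1))) (seq 1 k).

Lemma Cs_closed k : (1 <= k)%nat -> Cs k = 2 * INR k - 1 - INR k * H2 k.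
Proof.
  intros Hk. assert (E : Us k = Cs k + 1).
  { unfold Us, Cs. destruct k as [|n]; [lia|]. replace (S n - 1)%nat with n by lia.
    rewrite (lsum_ext_in _ (fun p => lsum (fun q => INR (p + q - S n) / (INR p * INR q)) (seq 1 n)
                 + / INR (S n))).
    - rewrite lsum_plus, lsum_const, length_seq. field. apply not_0_INR; lia.
    - intros p Hp. assert (0 < INR p) by (eapply INR_pos_seq; [|eauto]; lia).
      rewrite lsum_seqS_last. f_equal. replace (p + (1 + n) - S n)%nat with p by lia.
      replace (1 + n)%nat with (S n) by lia. field. split; [apply not_0_INR; lia| lra]. }
  rewrite Us_closed in E. lra.
Qed.

Definition Gr (k : nat) (x : R) : R := acos (cos (PI * x / INR k)).

Lemma dist_circ k a b : arc_dist (circ_pt k a) (circ_pt k b) = Gr k (INR a - INR b).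
Proof.
  unfold arc_dist, circ_pt, Gr; simpl. rewrite <- cos_minus. f_equal. f_equal. unfold Rdiv; ring.
Qed.

Lemma Gr_neg k x : Gr k (- x) = Gr k x.
Proof. unfold Gr. replace (PI * - x / INR k) with (- (PI * x / INR k)) by (unfold Rdiv; ring).
  rewrite cos_neg; auto. Qed.

Lemma Gr_per k x : (0 < k)%nat -> Gr k (x + 2 * INR k) = Gr k x.
Proof.
  intros Hk. unfold Gr. replace (PI * (x + 2 * INR k) / INR k) with (PI * x / INR k + 2 * INR 1 * PI).
  - rewrite cos_period; auto.
  - simpl. field. apply not_0_INR; lia.
Qed.

Lemma Gr_per' k x : (0 < k)%nat -> Gr k (x - 2 * INR k) = Gr k x.
Proof. intros Hk. rewrite <- (Gr_per k (x - 2 * INR k)) by auto. f_equal; ring. Qed.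

Lemma Gr_val k x : (0 < k)%nat -> 0 <= x <= INR k -> Gr k x = PI * x / INR k.
Proof.
  intros Hk [H1 H2]. assert (0 < INR k) by (apply lt_0_INR; lia).
  unfold Gr. apply acos_cos. split.
  - apply Rmult_le_pos; [|left; apply Rinv_0_lt_compat; lra]. pose proof PI_RGT_0; nra.
  - apply Rmult_le_reg_r with (INR k); auto. unfold Rdiv. rewrite Rmult_assoc, Rinv_l by lra.
    pose proof PI_RGT_0; nra.
Qed.

Lemma Gr_valn k x : (0 < k)%nat -> - INR k <= x <= 0 -> Gr k x = PI * (- x) / INR k.
Proof. intros. rewrite <- Gr_neg. apply Gr_val; auto; lra. Qed.

Lemma Gr_valf k x : (0 < k)%nat -> INR k <= x <= 2 * INR k -> Gr k x = PI * (2 * INR k - x) / INR k.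
Proof. intros. rewrite <- Gr_per', <- Gr_neg by auto. rewrite Gr_val; auto. f_equal. ring. lra. Qed.

Lemma acos_zero_iff c : -1 <= c <= 1 -> (acos c = 0 <-> c = 1).
Proof.
  intros Hc; split; intros H.
  - rewrite <- (cos_acos c) by auto. rewrite H. apply cos_0.
  - subst. rewrite <- cos_0. apply acos_cos. pose proof PI_RGT_0; lra.
Qed.

Lemma pt_eq_iff k a b : circ_pt k a = circ_pt k b <-> Gr k (INR a - INR b) = 0.
Proof.
  rewrite <- dist_circ. unfold arc_dist, circ_pt; simpl.
  set (u := PI * INR a / INR k). set (v := PI * INR b / INR k).
  rewrite <- cos_minus. rewrite acos_zero_iff by apply COS_bound.
  rewrite cos_minus. split; intros H.
  - injection H as E1 E2. rewrite <- E1, <- E2. pose proof (sin2_cos2 u). unfold Rsqr in *. lra.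
  - pose proof (sin2_cos2 u). pose proof (sin2_cos2 v). unfold Rsqr in *.
    assert (E : (cos u - cos v) * (cos u - cos v) + (sin u - sin v) * (sin u - sin v) = 0) by nra.
    apply Rplus_sqr_eq_0 in E. destruct E. f_equal; lra.
Qed.

Definition Hr k x y : R :=
  if Req_dec_T (Gr k x) 0 then 0 else if Req_dec_T (Gr k y) 0 then 0 else
  (Gr k x ^ 2 + Gr k y ^ 2 - Gr k (x - y) ^ 2) / (Gr k x * Gr k y).

Lemma h_circ k a b j : h_ker arc_dist (circ_pt k a) (circ_pt k b) (circ_pt k j) =
  Hr k (INR a - INR j) (INR b - INR j).
Proof.
  unfold h_ker, Hr. rewrite !dist_circ.
  replace (INR a - INR b) with ((INR a - INR j) - (INR b - INR j)) by ring.
  destruct (S1_eq_dec (circ_pt k j) (circ_pt k a)) as [E|E];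
   rewrite pt_eq_iff in E; rewrite <- Gr_neg in E; replace (- (INR j - INR a)) with (INR a - INR j) in E by ring;
   destruct (Req_dec_T (Gr k (INR a - INR j)) 0); try tauto; auto.
  destruct (S1_eq_dec (circ_pt k j) (circ_pt k b)) as [E'|E'];
   rewrite pt_eq_iff in E'; rewrite <- Gr_neg in E'; replace (- (INR j - INR b)) with (INR b - INR j) in E' by ring;
   destruct (Req_dec_T (Gr k (INR b - INR j)) 0); try tauto; auto.
Qed.

Lemma Hr_sym k x y : Hr k x y = Hr k y x.
Proof.
  unfold Hr. replace (y - x) with (- (x - y)) by ring. rewrite Gr_neg.
  destruct (Req_dec_T (Gr k x) 0), (Req_dec_T (Gr k y) 0); cbv beta iota; auto. rewrite (Rmult_comm (Gr k y)). f_equal. ring.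
Qed.

Lemma Hr_neg k x y : Hr k (-x) (-y) = Hr k x y.
Proof.
  unfold Hr. replace (-x - -y) with (- (x - y)) by ring. rewrite !Gr_neg. auto.
Qed.

Lemma Hr_perx k x y : (0 < k)%nat -> Hr k (x + 2 * INR k) y = Hr k x y.
Proof.
  intros Hk. unfold Hr. replace (x + 2 * INR k - y) with ((x - y) + 2 * INR k) by ring.
  rewrite !Gr_per by auto. auto.
Qed.

Lemma Hr_pery k x y : (0 < k)%nat -> Hr k x (y + 2 * INR k) = Hr k x y.
Proof. intros. rewrite Hr_sym, Hr_perx, Hr_sym; auto. Qed.

Lemma Gr_sq k z : (0 < k)%nat -> - INR k <= z <= INR k -> Gr k z ^ 2 = (PI / INR k) ^ 2 * z ^ 2.
Proof.
  intros Hk Hz. destruct (Rle_dec 0 z).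
  - rewrite Gr_val by (auto; lra). unfold Rdiv; ring.
  - rewrite Gr_valn by (auto; lra). unfold Rdiv; ring.
Qed.

Lemma Hr_0 k y : (0 < k)%nat -> Hr k 0 y = 0.
Proof.
  intros Hk. pose proof (pos_INR k). unfold Hr. rewrite Gr_val by (auto; lra).
  destruct (Req_dec_T (PI * 0 / INR k) 0); auto. exfalso; apply n; unfold Rdiv; ring.
Qed.

Lemma Hr_pp k x y : (0 < k)%nat -> 0 < x <= INR k -> 0 < y <= INR k -> Hr k x y = 2.
Proof.
  intros Hk Hx Hy. assert (0 < INR k) by (apply lt_0_INR; lia). pose proof PI_RGT_0.
  unfold Hr. rewrite (Gr_sq k (x - y)) by (auto; lra).
  rewrite (Gr_val k x), (Gr_val k y) by (auto; lra).
  assert (PI * x / INR k <> 0). { apply Rgt_not_eq. unfold Rdiv. apply Rmult_gt_0_compat; [nra|]. apply Rinv_0_lt_compat; lra. }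
  assert (PI * y / INR k <> 0). { apply Rgt_not_eq. unfold Rdiv. apply Rmult_gt_0_compat; [nra|]. apply Rinv_0_lt_compat; lra. }
  destruct (Req_dec_T (PI * x / INR k) 0); [tauto|].
  destruct (Req_dec_T (PI * y / INR k) 0); [tauto|].
  field. repeat split; lra.
Qed.

Lemma Hr_pn k p w : (0 < k)%nat -> (1 <= p <= k)%nat -> (1 <= w <= k)%nat ->
  Hr k (INR p) (- INR w) = -2 + 4 * INR k * INR (p + w - k) / (INR p * INR w).
Proof.
  intros Hk Hp Hw. assert (0 < INR k) by (apply lt_0_INR; lia). pose proof PI_RGT_0.
  assert (1 <= INR p <= INR k) by (split; [apply (le_INR 1)|apply le_INR]; lia).
  assert (1 <= INR w <= INR k) by (split; [apply (le_INR 1)|apply le_INR]; lia).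
  unfold Hr. rewrite (Gr_val k (INR p)) by (auto; lra). rewrite (Gr_valn k (- INR w)) by (auto; lra).
  assert (PI * INR p / INR k <> 0). { apply Rgt_not_eq. unfold Rdiv. apply Rmult_gt_0_compat; [nra|]. apply Rinv_0_lt_compat; lra. }
  assert (PI * - - INR w / INR k <> 0). { apply Rgt_not_eq. unfold Rdiv. apply Rmult_gt_0_compat; [nra|]. apply Rinv_0_lt_compat; lra. }
  destruct (Req_dec_T (PI * INR p / INR k) 0); [tauto|].
  destruct (Req_dec_T (PI * - - INR w / INR k) 0); [tauto|].
  replace (INR p - - INR w) with (INR (p + w)) by (rewrite plus_INR; ring).
  destruct (Nat.le_gt_cases (p + w) k).
  - assert (INR (p + w) <= INR k) by (apply le_INR; lia). pose proof (pos_INR (p+w)).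
    rewrite Gr_val by (auto; lra).
    replace (p + w - k)%nat with 0%nat by lia. rewrite plus_INR. change (INR 0) with 0.
    field. repeat split; lra.
  - rewrite Gr_valf. 2: auto.
    2:{ assert (INR k <= INR (p + w)) by (apply le_INR; lia). rewrite plus_INR in *; lra. }
    rewrite minus_INR by lia. rewrite !plus_INR. field. repeat split; lra.
Qed.

Lemma per_shift1 (g : R -> R) K d : (forall x, g (x + INR K) = g x) ->
  lsum (fun a => g (INR a + d)) (seq 0 K) = lsum (fun a => g (INR a + (d + 1))) (seq 0 K).
Proof.
  intros Hg. destruct K as [|K]; [reflexivity|].
  transitivity (lsum (fun a => g (INR (S a) + d)) (seq 0 (S K))).
  2:{ apply lsum_ext; intros; rewrite S_INR; f_equal; ring. }
  rewrite <- (lsum_map (fun a => g (INR a + d)) S), seq_shift.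
  change (seq 0 (S K)) with (0%nat :: seq 1 K). simpl lsum at 1.
  rewrite lsum_seqS_last. rewrite <- Hg.
  replace (0 + d + INR (S K)) with (INR (1 + K) + d) by (rewrite plus_INR, (S_INR K); simpl; ring). ring.
Qed.

Lemma per_shift (g : R -> R) K c m : (forall x, g (x + INR K) = g x) ->
  lsum (fun a => g (INR a + c)) (seq 0 K) = lsum (fun a => g (INR a + (c + INR m))) (seq 0 K).
Proof.
  intros Hg. induction m.
  - apply lsum_ext; intros; simpl; f_equal; ring.
  - rewrite IHm, per_shift1 by auto. apply lsum_ext; intros. rewrite S_INR. f_equal; ring.
Qed.

Lemma per_move (g : R -> R) K j n : (forall x, g (x + INR K) = g x) ->
  lsum (fun a => g (INR a - INR j)) (seq 0 K) = lsum (fun a => g (INR a - INR n)) (seq 0 K).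
Proof.
  intros Hg.
  transitivity (lsum (fun a => g (INR a + (- INR j - INR n + INR n))) (seq 0 K)).
  - apply lsum_ext; intros; f_equal; ring.
  - rewrite <- per_shift by auto. rewrite (per_shift g K _ j) by auto.
    apply lsum_ext; intros; f_equal; ring.
Qed.

Lemma lsum_single {A} (g : A -> R) x : lsum g [x] = g x.
Proof. simpl; ring. Qed.

Section Blocks.
Variable n : nat.
Let k := S n.
Let f a b := Hr k (INR a - INR n) (INR b - INR n).
Definition cr n p w := -2 + 4 * INR (S n) * INR (p + w - S n) / (INR p * INR w).

Lemma kpos : (0 < k)%nat. Proof. unfold k; lia. Qed.
Lemma INRk : INR k = INR n + 1. Proof. unfold k; apply S_INR. Qed.

Lemma fNN a b : (a < n)%nat -> (b < n)%nat -> f a b = 2.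
Proof.
  intros Ha Hb. unfold f. rewrite <- Hr_neg.
  assert (INR a < INR n) by (apply lt_INR; auto). assert (INR b < INR n) by (apply lt_INR; auto).
  pose proof (pos_INR a); pose proof (pos_INR b).
  apply Hr_pp; [apply kpos| rewrite INRk; lra| rewrite INRk; lra].
Qed.

Lemma fZ1 a : f a n = 0.
Proof. unfold f. rewrite Rminus_diag, Hr_sym. apply Hr_0, kpos. Qed.

Lemma fZ2 b : f n b = 0.
Proof. unfold f. rewrite Rminus_diag. apply Hr_0, kpos. Qed.

Lemma fPP a b : (n < a <= S n + n)%nat -> (n < b <= S n + n)%nat -> f a b = 2.
Proof.
  intros Ha Hb. unfold f.
  assert (INR n < INR a) by (apply lt_INR; lia). assert (INR n < INR b) by (apply lt_INR; lia).
  assert (INR a <= INR n + INR (S n)) by (rewrite <- plus_INR; apply le_INR; lia).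
  assert (INR b <= INR n + INR (S n)) by (rewrite <- plus_INR; apply le_INR; lia).
  apply Hr_pp; [apply kpos| unfold k; lra| unfold k; lra].
Qed.

Lemma fPN a b : (n < a <= S n + n)%nat -> (b < n)%nat -> f a b = cr n (a - n) (n - b).
Proof.
  intros Ha Hb. unfold f, cr.
  replace (INR a - INR n) with (INR (a - n)) by (rewrite minus_INR; auto; lia).
  replace (INR b - INR n) with (- INR (n - b)) by (rewrite minus_INR; [ring|lia]).
  apply Hr_pn; unfold k; lia.
Qed.

Lemma fNP a b : (a < n)%nat -> (n < b <= S n + n)%nat -> f a b = cr n (b - n) (n - a).
Proof. intros. unfold f. rewrite Hr_sym. apply fPN; auto. Qed.

Lemma split_seq : seq 0 (2 * S n) = seq 0 n ++ [n] ++ seq (S n) (S n).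
Proof.
  replace (2 * S n)%nat with (n + (1 + S n))%nat by lia. rewrite !seq_app. simpl. replace (n + 1)%nat with (S n) by lia. reflexivity.
Qed.

Lemma cross_sum :
  lsum (fun a => lsum (fun b => cr n (a - n) (n - b)) (seq 0 n)) (seq (S n) (S n))
  = -2 * INR (S n) * INR n + 4 * INR (S n) * Cs (S n).
Proof.
  change (seq (S n) (S n)) with (seq (1 + n) (S n)). rewrite lsum_seq_shift.
  rewrite (lsum_ext _ (fun p => lsum (fun w => cr n p w) (seq 1 n))).
  2:{ intros p. rewrite (lsum_refl (fun w => cr n (p + n - n) w)). apply lsum_ext; intros.
      f_equal. lia. }
  unfold cr, Cs. replace (S n - 1)%nat with n by lia.
  rewrite (lsum_ext _ (fun p => INR n * -2 + 4 * INR (S n) *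
     lsum (fun q => INR (p + q - S n) / (INR p * INR q)) (seq 1 n))).
  - rewrite lsum_plus, lsum_const, lsum_scal, length_seq. ring.
  - intros p. rewrite lsum_plus, lsum_const, length_seq, <- lsum_scal. f_equal.
    apply lsum_ext; intros; unfold Rdiv; ring.
Qed.

Lemma S_total :
  lsum (fun a => lsum (fun b => f a b) (seq 0 (2 * S n))) (seq 0 (2 * S n)) = 2 + 8 * INR (S n) * Cs (S n).
Proof.
  rewrite split_seq.
  rewrite (lsum_ext _ (fun a => lsum (fun b => f a b) (seq 0 n) + f a n +
                                 lsum (fun b => f a b) (seq (S n) (S n)))).
  2:{ intros a. rewrite !lsum_app. simpl. ring. }
  rewrite !lsum_app, lsum_single. cbv beta.
  rewrite fZ1.
  rewrite (lsum_ext_in (fun a => lsum (fun b => f a b) (seq 0 n) + f a n + lsum (fun b => f a b) (seq (S n) (S n)))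
     (fun a => 2 * INR n + lsum (fun b => cr n (b - n) (n - a)) (seq (S n) (S n)))  (seq 0 n)).
  2:{ intros a Ha. apply in_seq in Ha. rewrite fZ1.
      rewrite (lsum_ext_in _ (fun _ => 2)). 2:{ intros b Hb; apply in_seq in Hb; apply fNN; lia. }
      rewrite (lsum_ext_in (fun b => f a b) (fun b => cr n (b - n) (n - a))).
      2:{ intros b Hb; apply in_seq in Hb; apply fNP; lia. }
      rewrite lsum_const, length_seq. ring. }
  rewrite (lsum_ext_in (fun a => lsum (fun b => f a b) (seq 0 n) + f a n + lsum (fun b => f a b) (seq (S n) (S n)))
     (fun a => lsum (fun b => cr n (a - n) (n - b)) (seq 0 n) + 2 * INR (S n))  (seq (S n) (S n))).
  2:{ intros a Ha. apply in_seq in Ha. rewrite fZ1.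
      rewrite (lsum_ext_in (fun b => f a b) (fun _ => 2) (seq (S n) (S n))).
      2:{ intros b Hb; apply in_seq in Hb; apply fPP; lia. }
      rewrite (lsum_ext_in (fun b => f a b) (fun b => cr n (a - n) (n - b))).
      2:{ intros b Hb; apply in_seq in Hb; apply fPN; lia. }
      rewrite lsum_const, length_seq. ring. }
  rewrite !(lsum_ext (fun b => f n b) (fun _ => 0)) by (intros; apply fZ2).
  rewrite !lsum_plus, !lsum_const, !length_seq.
  rewrite (lsum_swap (fun a b => cr n (b - n) (n - a))).
  rewrite cross_sum. rewrite S_INR. ring.
Qed.

End Blocks.

Lemma H2_sum n : sum_f_R0 (fun i => 1 / INR (i + 1) ^ 2) n = H2 (S n).
Proof.
  induction n.
  - unfold H2. simpl. ring.
  - change (sum_f_R0 (fun i => 1 / INR (i + 1) ^ 2) (S n)) with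
      (sum_f_R0 (fun i => 1 / INR (i + 1) ^ 2) n + 1 / INR (S n + 1) ^ 2).
    rewrite IHn, (H2_S (S n)). rewrite plus_INR. reflexivity.
Qed.

Theorem mainTheorem13 (k : nat) (hk : (1 <= k)%nat) (j : nat) (hj : (j < 2 * k)%nat) :
  metric_spatial_depth arc_dist (P2k_pts k) (circ_pt k j)
  = -1 + 1 / INR k - 1 / (4 * INR k ^ 2)
    + sum_f_R0 (fun i => 1 / INR (i + 1) ^ 2) (k - 1).
Proof.
  destruct k as [|n]; [lia|].
  unfold metric_spatial_depth, unif_expect_h, P2k_pts.
  rewrite length_map, length_seq, lsum_map.
  assert (EK : INR (2 * S n) = 2 * INR (S n)) by (rewrite mult_INR; simpl; ring).
  rewrite (lsum_ext _ (fun a => lsum (fun b => Hr (S n) (INR a - INR j) (INR b - INR n)) (seq 0 (2 * S n)))).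
  2:{ intros a. rewrite lsum_map.
      rewrite (lsum_ext _ (fun b => Hr (S n) (INR a - INR j) (INR b - INR j))) by (intros; apply h_circ).
      apply (per_move (fun y => Hr (S n) (INR a - INR j) y)).
      intros x. rewrite EK. apply Hr_pery. lia. }
  rewrite (per_move (fun x => lsum (fun b => Hr (S n) x (INR b - INR n)) (seq 0 (2 * S n))) _ j n).
  2:{ intros x. apply lsum_ext. intros b. rewrite EK. apply Hr_perx. lia. }
  rewrite (S_total n). rewrite (Cs_closed (S n)) by lia.
  replace (S n - 1)%nat with n by lia. rewrite H2_sum.
  rewrite EK. pose proof (pos_INR n). rewrite S_INR. field. lra.
Qed.
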